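(* Let $n>7$ with $n\equiv 3\pmod 4$ and put $k=\frac{n-5}{2}$. In the automaton $\mathcal{F}_n$, the minimum length of a word $w$ over $\{a,b\}$ with $\{q_2,q_4\}\cdot w=\{q_{k+2},q_{k+4}\}$ is exactly $\frac{n^2}{4}+\frac{5n}{4}-7$.
   Context: Words act on states letter by letter from left to right, and on sets elementwise. For odd $n\ge7$, the automaton $\mathcal{F}_n$ has states $q_1,\dots,q_n$ and two letters $a,b$, both permutations, defined as follows (every state not mentioned for a letter is fixed by it): $a$ acts as the 4-cycle $q_1\to q_2\to q_3\to q_4\to q_1$; $b$ swaps $q_1$ and $q_6$; for each $1\le i\le\frac{n-3}{2}$, the states $q_{2i+1}$ and $q_{2i+3}$ are swapped by $b$ if $i$ is odd and by $a$ if $i$ is even; for each $3\le j\le\frac{n-3}{2}$, the states $q_{2j}$ and $q_{2j+2}$ are swapped by $a$ if $j$ is odd and by $b$ if $j$ is even. *)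

(* Defs.v *)
From mathcomp Require Import all_boot.
Set Implicit Arguments. Unset Strict Implicit. Unset Printing Implicit Defensive.

(* States q_1..q_n are represented by the natural numbers 1..n. *)
Inductive letter := La | Lb.

Definition swap_in (ps : seq (nat * nat)) (q : nat) : nat :=
  foldr (fun p r => if q == p.1 then p.2 else if q == p.2 then p.1 else r) q ps.

Definition odd_pairs (n : nat) (par : bool) : seq (nat * nat) :=
  [seq (2 * i + 1, 2 * i + 3) | i <- iota 1 ((n - 3) %/ 2) & odd i == par].

Definition even_pairs (n : nat) (par : bool) : seq (nat * nat) :=
  [seq (2 * j, 2 * j + 2) | j <- iota 3 ((n - 3) %/ 2 - 2) & odd j == par].

Definition act_a (n q : nat) : nat :=
  if q == 1 then 2 else if q == 2 then 3 else if q == 3 then 4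
  else if q == 4 then 1
  else swap_in (odd_pairs n false ++ even_pairs n true) q.

Definition act_b (n q : nat) : nat :=
  swap_in ((1, 6) :: odd_pairs n true ++ even_pairs n false) q.

Definition act_letter (n : nat) (l : letter) (q : nat) : nat :=
  match l with La => act_a n q | Lb => act_b n q end.

Definition act_word (n : nat) (w : seq letter) (q : nat) : nat :=
  foldl (fun q l => act_letter n l q) q w.

Definition act_set (n : nat) (S : seq nat) (w : seq letter) : seq nat :=
  [seq act_word n w q | q <- S].

(* Main.v *)
From Stdlib Require Import ZArith Lia.
Open Scope Z_scope.

Definition nZ t := 4*t+3.

Definition r_1 t Q := let n := nZ t in
  if Q <=? 1 then 0 else if Q <=? n-1 then Q else 2*n-1-Q.

Definition r_odd t j Q :=
  let n := nZ t in let h := 2*j+1 in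
  if Q <=? 1 then 1 - Q
  else if Q <=? n-h then Q+1
  else if Q <=? n-h+2 then (if j =? 1 then n else 2*(n-h)+5-Q)
  else if Q <=? n - (j+1) then Q+1
  else if Q <=? n-2 then 2*n+1-h-Q
  else if Q =? n-1 then n+4-h
  else if Q <=? 2*n-h-2 then 2*n+1-h-Q
  else if Q <=? 2*n-h then Q-(2*n-h-1)
  else if Q <=? 2*n-(j+1) then Q-(2*n-h+1)
  else 2*n-1-Q.

Definition r_even_gen t j Q :=
  let n := nZ t in let h := 2*j in let e1 := 2*t+1-j in
  if Q <=? 1 then Q
  else if Q <=? e1 then Q-2
  else if Q <=? n-h-2 then n-h-2-Q
  else if Q <=? n-h then n-h-Q
  else if Q <=? n-1 then Q-(n-h-2)
  else if Q <=? n+1 then n+h+4-Q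
  else if Q <=? n+e1 then Q-(n-h-2)
  else 2*n+2-Q.

Definition r_even t j Q :=
  let n := nZ t in let h := 2*j in let e1 := 2*t+1-j in
  if j =? 1 then
    (if n <=? Q then (if Q =? n then 4 else if Q <=? n+e1 then Q-(n-h-2)-1 else 2*n+1-Q)
     else r_even_gen t j Q)
  else r_even_gen t j Q.

Definition r_top t Q :=
  if Q <=? 2 then t+3-Q
  else if Q <=? 2*t+2 then Q+t-1
  else if Q <=? 2*t+4 then 5*t+7-Q
  else if Q <=? 3*t+2 then Q+t-1
  else if Q <=? 6*t+3 then 7*t+4-Q
  else if Q <=? 7*t+5 then 7*t+5-Q
  else Q-(7*t+6).

Definition mo t j := 5*t+4+(t-1-j)*(4*t+6).
Definition me t j := mo t j + nZ t - 2*j + 1.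
Definition m1 t := mo t 1 + nZ t + 2.

Definition Dz t h Q :=
  if h =? 2*t+1 then r_top t Q
  else if h =? 1 then m1 t + r_1 t Q
  else if Z.odd h then mo t (h/2) + r_odd t (h/2) Q
  else me t (h/2) + r_even t (h/2) Q.

Definition refl t (c Q : Z) := if Q <=? c then c - Q else c + 2*nZ t - Q.

Definition tstepA t h Q : Z * Z :=
  let n := nZ t in
  if Z.odd h then
    if (h =? 1) then
      (if Q =? n-2 then (1, n) else if Q =? 2*n-3 then (2, n) else if Q =? 2*n-1 then (2, 2*n-1)
       else (1, refl t (2*n-2) Q))
    else if h =? 2*t+1 then
      (if Q =? 2*n-h-2 then (h, 2*n-h) else if Q =? 2*n-1 then (h, 1)
       else if Q =? n-h-1 then (h-1, 1) else if Q =? n-2 then (h-1, n+1-h)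
       else (h, refl t (2*n-1-h) Q))
    else if Q =? n-h-1 then (h-1, 1)
    else if Q =? n-2 then (h-1, n+1-h)
    else if Q =? 2*n-h-2 then (h+1, n)
    else if Q =? 2*n-1 then (h+1, 2*n-h)
    else (h, refl t (2*n-1-h) Q)
  else
    if Q =? n-h-2 then (h+1, n)
    else if Q =? n-2 then (h-1, 2*n+1-h)
    else if Q =? 2*n-h-1 then (h-1, 1)
    else if Q =? 2*n-1 then (h+1, n-h)
    else (h, refl t (n-1-h) Q).

Definition tstepB t h Q : Z * Z :=
  let n := nZ t in
  if Z.odd h then
    if (h =? 1) then
      (if Q =? n then (1, n) else if Q =? 1 then (2, 2*n-1) else if Q =? 2*n-1 then (2, n)
       else (1, refl t (2*n) Q))
    else if h =? 2*t+1 then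
      (if Q =? 1 then (h, 1) else if Q =? 2*n-h then (h, 2*n-h)
       else if Q =? n-h+1 then (h-1, 1) else if Q =? n then (h-1, n+1-h)
       else (h, refl t (2*n+1-h) Q))
    else if Q =? 1 then (h+1, 2*n-h)
    else if Q =? n-h+1 then (h-1, 1)
    else if Q =? n then (h-1, n+1-h)
    else if Q =? 2*n-h then (h+1, n)
    else (h, refl t (2*n+1-h) Q)
  else
    if Q =? 1 then (h+1, n-h)
    else if Q =? n-h then (h+1, n)
    else if Q =? n then (h-1, 2*n+1-h)
    else if Q =? 2*n-h+1 then (h-1, 1)
    else (h, refl t (n+1-h) Q).

Lemma Dz_top t h Q : h = 2*t+1 -> Dz t h Q = r_top t Q.
Proof. intros ->. unfold Dz. now rewrite Z.eqb_refl. Qed.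
Lemma Dz_one t Q : 2 <= t -> Dz t 1 Q = m1 t + r_1 t Q.
Proof. intros. unfold Dz. replace (1 =? 2*t+1) with false by (symmetry; apply Z.eqb_neq; lia). now rewrite Z.eqb_refl. Qed.
Lemma Dz_odd t h j Q : h = 2*j+1 -> 1 <= j <= t-1 -> Dz t h Q = mo t j + r_odd t j Q.
Proof. intros -> Hj. unfold Dz.
  replace (2*j+1 =? 2*t+1) with false by (symmetry; apply Z.eqb_neq; lia).
  replace (2*j+1 =? 1) with false by (symmetry; apply Z.eqb_neq; lia).
  replace (Z.odd (2*j+1)) with true by (symmetry; rewrite Z.add_comm; apply Z.odd_add_mul_2).
  replace ((2*j+1)/2) with j by (apply Z.div_unique with 1; lia). reflexivity. Qed.
Lemma Dz_even t h j Q : h = 2*j -> 1 <= j <= t -> Dz t h Q = me t j + r_even t j Q.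
Proof. intros -> Hj. unfold Dz.
  replace (2*j =? 2*t+1) with false by (symmetry; apply Z.eqb_neq; lia).
  replace (2*j =? 1) with false by (symmetry; apply Z.eqb_neq; lia).
  replace (Z.odd (2*j)) with false by (symmetry; rewrite <- (Z.add_0_l (2*j)); rewrite Z.odd_add_mul_2; reflexivity).
  replace ((2*j)/2) with j by (apply Z.div_unique with 0; lia). reflexivity. Qed.

Ltac splitall :=
  repeat (match goal with |- context[if ?c then _ else _] =>
            lazymatch c with context[if _ then _ else _] => fail | _ =>
            let H := fresh "H" in destruct c eqn:H;
            [ first [apply Z.leb_le in H | apply Z.eqb_eq in H | idtac]
            | first [apply Z.leb_gt in H | apply Z.eqb_neq in H | idtac]] end end).

Ltac rwDz j :=
  repeat match goal with
  | |- context[Dz ?t ?h ?Q] =>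
     first [ rewrite (Dz_top t h Q) by lia
           | rewrite (Dz_odd t h j Q) by lia | rewrite (Dz_odd t h (j-1) Q) by lia
           | rewrite (Dz_odd t h (j+1) Q) by lia
           | rewrite (Dz_even t h j Q) by lia | rewrite (Dz_even t h (j+1) Q) by lia
           | rewrite (Dz_even t h (j-1) Q) by lia
           | replace h with 1 by lia; rewrite (Dz_one t Q) by lia ]
  end.

Lemma mo_succ t j : mo t (j+1) = mo t j - (4*t+6).
Proof. unfold mo. ring. Qed.
Lemma mo_t t : mo t t = t - 2.
Proof. unfold mo. ring. Qed.

Ltac mfacts t j :=
  pose proof (mo_succ t j); pose proof (mo_succ t (j-1)); pose proof (mo_t t);
  replace (j-1+1) with j in * by ring;
  unfold me, m1 in *; unfold nZ in *.


Ltac oddfacts :=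
  repeat match goal with
  | |- context[Z.odd (2*?j+1)] => replace (Z.odd (2*j+1)) with true by (symmetry; rewrite Z.add_comm; apply Z.odd_add_mul_2)
  | |- context[Z.odd (2*?j)] => replace (Z.odd (2*j)) with false by (symmetry; rewrite <- (Z.add_0_l (2*j)); rewrite Z.odd_add_mul_2; reflexivity)
  end.

Ltac finish t j :=
  splitall; try lia; cbn [fst snd]; rwDz j; mfacts t j;
  unfold r_odd, r_even, r_even_gen, r_top, r_1, refl in *; unfold nZ in *; splitall;
  first [lia | match goal with |- ?G => idtac "FAILED"; idtac G; fail 100 end].

Definition valQ t Q := exists i, Q = 2*i+1 /\ 1 <= Q <= 2*nZ t - 1.

Lemma lipA_odd t j Q : 2 <= t -> 1 <= j <= t-1 -> valQ t Q ->
  Dz t (2*j+1) Q <= Dz t (fst (tstepA t (2*j+1) Q)) (snd (tstepA t (2*j+1) Q)) + 1.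
Proof.
  intros Ht Hj [i [HQ HQr]]. rewrite (Dz_odd t (2*j+1) j) by lia.
  unfold tstepA; oddfacts; finish t j.
Qed.
Lemma lipB_odd t j Q : 2 <= t -> 1 <= j <= t-1 -> valQ t Q ->
  Dz t (2*j+1) Q <= Dz t (fst (tstepB t (2*j+1) Q)) (snd (tstepB t (2*j+1) Q)) + 1.
Proof.
  intros Ht Hj [i [HQ HQr]]. rewrite (Dz_odd t (2*j+1) j) by lia.
  unfold tstepB; oddfacts; finish t j.
Qed.

Lemma lipA_even t j Q : 2 <= t -> 1 <= j <= t -> valQ t Q ->
  Dz t (2*j) Q <= Dz t (fst (tstepA t (2*j) Q)) (snd (tstepA t (2*j) Q)) + 1.
Proof.
  intros Ht Hj [i [HQ HQr]]. rewrite (Dz_even t (2*j) j) by lia.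
  unfold tstepA; oddfacts.
  destruct (Z.eq_dec j 1) as [->|Hj1]; [|destruct (Z.eq_dec j t) as [->|Hjt]].
  - finish t 1.
  - finish t t.
  - finish t j.
Qed.
Lemma lipB_even t j Q : 2 <= t -> 1 <= j <= t -> valQ t Q ->
  Dz t (2*j) Q <= Dz t (fst (tstepB t (2*j) Q)) (snd (tstepB t (2*j) Q)) + 1.
Proof.
  intros Ht Hj [i [HQ HQr]]. rewrite (Dz_even t (2*j) j) by lia.
  unfold tstepB; oddfacts.
  destruct (Z.eq_dec j 1) as [->|Hj1]; [|destruct (Z.eq_dec j t) as [->|Hjt]].
  - finish t 1.
  - finish t t.
  - finish t j.
Qed.
Lemma lipA_one t Q : 2 <= t -> valQ t Q ->
  Dz t 1 Q <= Dz t (fst (tstepA t 1 Q)) (snd (tstepA t 1 Q)) + 1.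
Proof.
  intros Ht [i [HQ HQr]]. rewrite (Dz_one t) by lia.
  unfold tstepA; replace (Z.odd 1) with true by reflexivity. finish t 1.
Qed.
Lemma lipB_one t Q : 2 <= t -> valQ t Q ->
  Dz t 1 Q <= Dz t (fst (tstepB t 1 Q)) (snd (tstepB t 1 Q)) + 1.
Proof.
  intros Ht [i [HQ HQr]]. rewrite (Dz_one t) by lia.
  unfold tstepB; replace (Z.odd 1) with true by reflexivity. finish t 1.
Qed.
Lemma lipA_top t Q : 2 <= t -> valQ t Q ->
  Dz t (2*t+1) Q <= Dz t (fst (tstepA t (2*t+1) Q)) (snd (tstepA t (2*t+1) Q)) + 1.
Proof.
  intros Ht [i [HQ HQr]]. rewrite (Dz_top t) by lia.
  unfold tstepA; oddfacts. finish t t.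
Qed.
Lemma lipB_top t Q : 2 <= t -> valQ t Q ->
  Dz t (2*t+1) Q <= Dz t (fst (tstepB t (2*t+1) Q)) (snd (tstepB t (2*t+1) Q)) + 1.
Proof.
  intros Ht [i [HQ HQr]]. rewrite (Dz_top t) by lia.
  unfold tstepB; oddfacts. finish t t.
Qed.

Ltac finq t j :=
  splitall; try lia; cbn [fst snd]; rwDz j; mfacts t j;
  unfold r_odd, r_even, r_even_gen, r_top, r_1, refl in *; unfold nZ in *; splitall; lia.

Ltac descend t j :=
  first [ left; unfold tstepA; oddfacts; try replace (Z.odd 1) with true by reflexivity; finq t j
        | right; unfold tstepB; oddfacts; try replace (Z.odd 1) with true by reflexivity; finq t j
        | match goal with |- ?G => idtac "DESCFAIL"; idtac G; fail 100 end ].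

Lemma desc_odd t j Q : 2 <= t -> 1 <= j <= t-1 -> valQ t Q ->
  Dz t (fst (tstepA t (2*j+1) Q)) (snd (tstepA t (2*j+1) Q)) + 1 = Dz t (2*j+1) Q \/
  Dz t (fst (tstepB t (2*j+1) Q)) (snd (tstepB t (2*j+1) Q)) + 1 = Dz t (2*j+1) Q.
Proof.
  intros Ht Hj [i [HQ HQr]]. rewrite (Dz_odd t (2*j+1) j) by lia.
  unfold r_odd; splitall; descend t j.
Qed.

Lemma desc_even t j Q : 2 <= t -> 1 <= j <= t -> valQ t Q ->
  Dz t (fst (tstepA t (2*j) Q)) (snd (tstepA t (2*j) Q)) + 1 = Dz t (2*j) Q \/
  Dz t (fst (tstepB t (2*j) Q)) (snd (tstepB t (2*j) Q)) + 1 = Dz t (2*j) Q.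
Proof.
  intros Ht Hj [i [HQ HQr]]. rewrite (Dz_even t (2*j) j) by lia.
  destruct (Z.eq_dec j 1) as [->|Hj1]; [|destruct (Z.eq_dec j t) as [->|Hjt]].
  - unfold r_even, r_even_gen; splitall; descend t 1.
  - unfold r_even, r_even_gen; splitall; descend t t.
  - unfold r_even, r_even_gen; splitall; descend t j.
Qed.
Lemma desc_one t Q : 2 <= t -> valQ t Q ->
  Dz t (fst (tstepA t 1 Q)) (snd (tstepA t 1 Q)) + 1 = Dz t 1 Q \/
  Dz t (fst (tstepB t 1 Q)) (snd (tstepB t 1 Q)) + 1 = Dz t 1 Q.
Proof.
  intros Ht [i [HQ HQr]]. rewrite (Dz_one t) by lia.
  unfold r_1; splitall; descend t 1.
Qed.
Lemma desc_top t Q : 2 <= t -> valQ t Q -> 0 < Dz t (2*t+1) Q ->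
  Dz t (fst (tstepA t (2*t+1) Q)) (snd (tstepA t (2*t+1) Q)) + 1 = Dz t (2*t+1) Q \/
  Dz t (fst (tstepB t (2*t+1) Q)) (snd (tstepB t (2*t+1) Q)) + 1 = Dz t (2*t+1) Q.
Proof.
  intros Ht [i [HQ HQr]]. rewrite (Dz_top t) by lia. intros Hpos.
  unfold r_top in *; splitall; descend t t.
Qed.

Definition Aps t x := let n := nZ t in if x =? n-2 then 0 else if x =? n-1 then 1 else n-1-x.
Definition Bps t x := if x <=? 1 then x else nZ t+1-x.
Definition Qof t lo := if Z.odd lo then lo else lo + nZ t.
Definition cord t u v := if v - u <=? 2*t+1 then (v-u, Qof t u) else (nZ t-(v-u), Qof t v).
Definition canon t x y := if x <? y then cord t x y else cord t y x.
Definition lo_of t Q := if Q <? nZ t then Q else Q - nZ t.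
Definition hi_of t h Q := if lo_of t Q + h <? nZ t then lo_of t Q + h else lo_of t Q + h - nZ t.

Lemma odd_T x : Z.odd x = true -> exists k, x = 2*k+1.
Proof. intros H. apply Z.odd_spec in H. exact H. Qed.
Lemma odd_F x : Z.odd x = false -> exists k, x = 2*k.
Proof. intros H. assert (Z.even x = true) by (rewrite <- Z.negb_odd, H; reflexivity).
  apply Z.even_spec in H0. exact H0. Qed.

Ltac splitZ :=
  repeat (match goal with |- context[if ?c then _ else _] =>
            lazymatch c with context[if _ then _ else _] => fail | _ =>
            let H := fresh "H" in destruct c eqn:H;
            [ first [apply Z.leb_le in H | apply Z.eqb_eq in H | apply Z.ltb_lt in H
                    | (apply odd_T in H; destruct H as [? H]) | idtac]
            | first [apply Z.leb_gt in H | apply Z.eqb_neq in H | apply Z.ltb_ge in H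
                    | (apply odd_F in H; destruct H as [? H]) | idtac]] end end).

Definition valid t h Q := 1 <= h <= 2*t+1 /\ valQ t Q.

Lemma simA t h Q : 2 <= t -> valid t h Q ->
  canon t (Aps t (lo_of t Q)) (Aps t (hi_of t h Q)) = tstepA t h Q.
Proof.
  intros Ht [Hh [i [HQ HQr]]].
  destruct (Z.Even_or_Odd h) as [[j Hj]|[j Hj]]; subst h.
  - unfold tstepA; oddfacts.
    unfold canon, cord, Qof, Aps, hi_of, lo_of, refl in *; unfold nZ in *; splitZ;
    apply pair_equal_spec; split; first [lia | (match goal with |- ?G => idtac "FAILED" G end; repeat match goal with H : ?T |- _ => idtac H ":" T; clear H end; fail 100)].
  - unfold tstepA; oddfacts.
    unfold canon, cord, Qof, Aps, hi_of, lo_of, refl in *; unfold nZ in *; splitZ;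
    apply pair_equal_spec; split; lia.
Qed.

Lemma simB t h Q : 2 <= t -> valid t h Q ->
  canon t (Bps t (lo_of t Q)) (Bps t (hi_of t h Q)) = tstepB t h Q.
Proof.
  intros Ht [Hh [i [HQ HQr]]].
  destruct (Z.Even_or_Odd h) as [[j Hj]|[j Hj]]; subst h.
  - unfold tstepB; oddfacts.
    unfold canon, cord, Qof, Bps, hi_of, lo_of, refl in *; unfold nZ in *; splitZ;
    apply pair_equal_spec; split; first [lia | (match goal with |- ?G => idtac "FAILED" G end; repeat match goal with H : ?T |- _ => idtac H ":" T; clear H end; fail 100)].
  - unfold tstepB; oddfacts.
    unfold canon, cord, Qof, Bps, hi_of, lo_of, refl in *; unfold nZ in *; splitZ;
    apply pair_equal_spec; split; lia.
Qed.

Definition BpsZ := Bps.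

Lemma canon_sym t x y : x <> y -> canon t x y = canon t y x.
Proof. intros. unfold canon. destruct (Z.ltb_spec x y); destruct (Z.ltb_spec y x); try lia; reflexivity. Qed.

Ltac wit t :=
  first [ match goal with H : _ = 2*?k+1 |- exists _, _ => exists k; lia end
        | match goal with H : _ = 2*?k |- exists _, _ => exists (k + 2*t+1); lia end ].



Lemma canon_valid t x y : 2 <= t -> 0 <= x < nZ t -> 0 <= y < nZ t -> x <> y ->
  valid t (fst (canon t x y)) (snd (canon t x y)).
Proof.
  intros Ht Hx Hy Hxy. unfold valid, valQ, canon, cord, Qof in *; unfold nZ in *.
  splitZ; cbn [fst snd]; (split; [lia| ]);
  first [ match goal with H : _ = 2*?k+1 |- exists _, _ => exists k; lia end
        | match goal with H : _ = 2*?k |- exists _, _ => exists (k + 2*t+1); lia end ].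
Qed.

Lemma canon_lohi t x y : 2 <= t -> 0 <= x < nZ t -> 0 <= y < nZ t -> x <> y ->
  (lo_of t (snd (canon t x y)) = x /\ hi_of t (fst (canon t x y)) (snd (canon t x y)) = y) \/
  (lo_of t (snd (canon t x y)) = y /\ hi_of t (fst (canon t x y)) (snd (canon t x y)) = x).
Proof.
  intros Ht Hx Hy Hxy. unfold canon, cord, Qof; unfold nZ in *.
  splitZ; cbn [fst snd]; unfold hi_of, lo_of; unfold nZ; splitZ; lia.
Qed.

Lemma Aps_range t x : 2 <= t -> 0 <= x < nZ t -> 0 <= Aps t x < nZ t.
Proof. intros. unfold Aps in *; unfold nZ in *; splitZ; lia. Qed.
Lemma Bps_range t x : 2 <= t -> 0 <= x < nZ t -> 0 <= Bps t x < nZ t.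
Proof. intros. unfold Bps in *; unfold nZ in *; splitZ; lia. Qed.
Lemma Aps_inj t x y : 2 <= t -> 0 <= x < nZ t -> 0 <= y < nZ t -> x <> y -> Aps t x <> Aps t y.
Proof. intros. unfold Aps in *; unfold nZ in *; splitZ; lia. Qed.
Lemma Bps_inj t x y : 2 <= t -> 0 <= x < nZ t -> 0 <= y < nZ t -> x <> y -> Bps t x <> Bps t y.
Proof. intros. unfold Bps in *; unfold nZ in *; splitZ; lia. Qed.

Lemma lo_hi_range t h Q : 2 <= t -> valid t h Q ->
  0 <= lo_of t Q < nZ t /\ 0 <= hi_of t h Q < nZ t /\ lo_of t Q <> hi_of t h Q.
Proof. intros Ht [Hh [i [HQ HQr]]]. unfold hi_of, lo_of; unfold nZ in *; splitZ; lia. Qed.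

Lemma simA' t x y : 2 <= t -> 0 <= x < nZ t -> 0 <= y < nZ t -> x <> y ->
  canon t (Aps t x) (Aps t y) = tstepA t (fst (canon t x y)) (snd (canon t x y)).
Proof.
  intros Ht Hx Hy Hxy. pose proof (canon_valid t x y Ht Hx Hy Hxy) as Hv.
  rewrite <- simA by assumption.
  destruct (canon_lohi t x y Ht Hx Hy Hxy) as [[-> ->]|[-> ->]]; [reflexivity|].
  apply canon_sym. apply Aps_inj; auto.
Qed.

Lemma simB' t x y : 2 <= t -> 0 <= x < nZ t -> 0 <= y < nZ t -> x <> y ->
  canon t (Bps t x) (Bps t y) = tstepB t (fst (canon t x y)) (snd (canon t x y)).
Proof.
  intros Ht Hx Hy Hxy. pose proof (canon_valid t x y Ht Hx Hy Hxy) as Hv.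
  rewrite <- simB by assumption.
  destruct (canon_lohi t x y Ht Hx Hy Hxy) as [[-> ->]|[-> ->]]; [reflexivity|].
  apply canon_sym. apply Bps_inj; auto.
Qed.

Lemma kinds t h : 2 <= t -> 1 <= h <= 2*t+1 ->
  h = 1 \/ h = 2*t+1 \/ (exists j, h = 2*j+1 /\ 1 <= j <= t-1) \/ (exists j, h = 2*j /\ 1 <= j <= t).
Proof.
  intros Ht Hh. destruct (Z.Even_or_Odd h) as [[j Hj]|[j Hj]].
  - right; right; right. exists j; lia.
  - destruct (Z.eq_dec j 0); [left; lia|]. destruct (Z.eq_dec j t); [right; left; lia|].
    right; right; left; exists j; lia.
Qed.

Lemma lipA_all t h Q : 2 <= t -> valid t h Q ->
  Dz t h Q <= Dz t (fst (tstepA t h Q)) (snd (tstepA t h Q)) + 1.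
Proof.
  intros Ht [Hh HQ]. destruct (kinds t h Ht Hh) as [->|[->|[[j [-> Hj]]|[j [-> Hj]]]]].
  - apply lipA_one; auto.
  - apply lipA_top; auto.
  - apply lipA_odd; auto.
  - apply lipA_even; auto.
Qed.
Lemma lipB_all t h Q : 2 <= t -> valid t h Q ->
  Dz t h Q <= Dz t (fst (tstepB t h Q)) (snd (tstepB t h Q)) + 1.
Proof.
  intros Ht [Hh HQ]. destruct (kinds t h Ht Hh) as [->|[->|[[j [-> Hj]]|[j [-> Hj]]]]].
  - apply lipB_one; auto.
  - apply lipB_top; auto.
  - apply lipB_odd; auto.
  - apply lipB_even; auto.
Qed.
Lemma desc_all t h Q : 2 <= t -> valid t h Q -> 0 < Dz t h Q ->
  Dz t (fst (tstepA t h Q)) (snd (tstepA t h Q)) + 1 = Dz t h Q \/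
  Dz t (fst (tstepB t h Q)) (snd (tstepB t h Q)) + 1 = Dz t h Q.
Proof.
  intros Ht [Hh HQ] Hp. destruct (kinds t h Ht Hh) as [->|[->|[[j [-> Hj]]|[j [-> Hj]]]]].
  - apply desc_one; auto.
  - apply desc_top; auto.
  - apply desc_odd; auto.
  - apply desc_even; auto.
Qed.

Lemma mo_nonneg t j : 2 <= t -> j <= t -> 0 <= mo t j.
Proof. intros. unfold mo. nia. Qed.

Lemma Dz_nonneg t h Q : 2 <= t -> valid t h Q -> 0 <= Dz t h Q.
Proof.
  intros Ht [Hh [i [HQ HQr]]]. destruct (kinds t h Ht Hh) as [->|[->|[[j [-> Hj]]|[j [-> Hj]]]]].
  - rewrite Dz_one by lia. pose proof (mo_nonneg t 1). unfold m1, r_1 in *; unfold nZ in *; splitall; lia.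
  - rewrite Dz_top by lia. unfold r_top; unfold nZ in *; splitall; lia.
  - rewrite (Dz_odd t _ j) by lia. pose proof (mo_nonneg t j). unfold r_odd in *; unfold nZ in *; splitall; lia.
  - rewrite (Dz_even t _ j) by lia. pose proof (mo_nonneg t j). unfold me, r_even, r_even_gen in *; unfold nZ in *; splitall; lia.
Qed.

Lemma Dz_zero t h Q : 2 <= t -> valid t h Q -> Dz t h Q = 0 -> h = 2*t+1 /\ (Q = 7*t+5 \/ Q = 7*t+6).
Proof.
  intros Ht [Hh [i [HQ HQr]]]. destruct (kinds t h Ht Hh) as [->|[->|[[j [-> Hj]]|[j [-> Hj]]]]].
  - rewrite Dz_one by lia. pose proof (mo_nonneg t 1). unfold m1, r_1 in *; unfold nZ in *; splitall; lia.
  - rewrite Dz_top by lia. unfold r_top; unfold nZ in *; splitall; lia.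
  - rewrite (Dz_odd t _ j) by lia. assert (0 < mo t j) by (unfold mo; nia). unfold r_odd in *; unfold nZ in *; splitall; lia.
  - rewrite (Dz_even t _ j) by lia. pose proof (mo_nonneg t j). unfold me, r_even, r_even_gen in *; unfold nZ in *; splitall; lia.
Qed.

Lemma Dz_start t : 2 <= t -> Dz t 1 (nZ t) = 4*t*t + 11*t - 1.
Proof. intros. rewrite Dz_one by lia. unfold m1, mo, r_1, nZ. splitall; nia. Qed.

Lemma canon_start t : 2 <= t -> canon t 0 1 = (1, nZ t).
Proof. intros. unfold canon, cord, Qof.
  replace (0 <? 1) with true by reflexivity.
  replace (1 - 0 <=? 2*t+1) with true by (symmetry; apply Z.leb_le; lia).
  replace (Z.odd 0) with false by reflexivity. apply pair_equal_spec; split; lia. Qed.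

Lemma canon_target t x y : 2 <= t -> 0 <= x < nZ t -> 0 <= y < nZ t -> x <> y ->
  fst (canon t x y) = 2*t+1 -> (snd (canon t x y) = 7*t+5 \/ snd (canon t x y) = 7*t+6) ->
  (Z.even t = true /\ ((x = t /\ y = 3*t+2) \/ (x = 3*t+2 /\ y = t))) \/
  (Z.even t = false /\ ((x = t+1 /\ y = 3*t+3) \/ (x = 3*t+3 /\ y = t+1))).
Proof.
  intros Ht Hx Hy Hxy H1 H2. destruct (Z.Even_or_Odd t) as [[k Hk]|[k Hk]]; subst t.
  - replace (Z.even (2*k)) with true by (rewrite Z.even_mul; reflexivity). left; split; [reflexivity|].
    revert H1 H2; unfold canon, cord, Qof in *; unfold nZ in *; splitZ; cbn [fst snd]; intros; lia.
  - replace (Z.even (2*k+1)) with false by (rewrite Z.add_comm, Z.even_add_mul_2; reflexivity). right; split; [reflexivity|].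
    revert H1 H2; unfold canon, cord, Qof in *; unfold nZ in *; splitZ; cbn [fst snd]; intros; lia.
Qed.

Lemma tgt_even s x y : 1 <= s -> ((x = 2*s /\ y = 6*s+2) \/ (x = 6*s+2 /\ y = 2*s)) ->
  Dz (2*s) (fst (canon (2*s) x y)) (snd (canon (2*s) x y)) = 0.
Proof.
  intros Hs [[-> ->]|[-> ->]]; unfold canon, cord, Qof; unfold nZ; splitZ; cbn [fst snd];
  first [lia | rewrite Dz_top by lia; unfold r_top; splitall; lia].
Qed.
Lemma tgt_odd s x y : 1 <= s -> ((x = 2*s+2 /\ y = 6*s+6) \/ (x = 6*s+6 /\ y = 2*s+2)) ->
  Dz (2*s+1) (fst (canon (2*s+1) x y)) (snd (canon (2*s+1) x y)) = 0.
Proof.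
  intros Hs [[-> ->]|[-> ->]]; unfold canon, cord, Qof; unfold nZ; splitZ; cbn [fst snd];
  first [lia | rewrite Dz_top by lia; unfold r_top; splitall; lia].
Qed.

Close Scope Z_scope.
Require Import Defs.
From mathcomp Require Import all_boot zify.

Set Implicit Arguments. Unset Strict Implicit. Unset Printing Implicit Defensive.

Lemma swap_in_cons p ps q : swap_in (p :: ps) q =
  if q == p.1 then p.2 else if q == p.2 then p.1 else swap_in ps q.
Proof. by []. Qed.

Lemma swap_in_notin ps q : (forall p, p \in ps -> (q != p.1) && (q != p.2)) -> swap_in ps q = q.
Proof.
elim: ps => [//|p ps IH] H. rewrite swap_in_cons.
have /andP[H1 H2] := H p (mem_head _ _). rewrite (negbTE H1) (negbTE H2).
apply: IH => p' Hp'. apply: H. by rewrite in_cons Hp' orbT.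
Qed.

Lemma swap_in_fst ps a b : (a, b) \in ps ->
  (forall p, p \in ps -> (a == p.1) || (a == p.2) -> p = (a, b)) -> swap_in ps a = b.
Proof.
elim: ps => [//|p ps IH] Hin H. rewrite swap_in_cons.
case: (boolP (a == p.1)) => H1.
  by rewrite (H p (mem_head _ _)) ?H1.
case: (boolP (a == p.2)) => H2.
  have Hp := H p (mem_head _ _). rewrite H2 orbT in Hp. have Hp' := Hp erefl.
  by rewrite Hp' /= eqxx in H1.
apply: IH.
  move: Hin; rewrite in_cons => /orP[/eqP Hp|//]. by rewrite -Hp /= eqxx in H1.
move=> p' Hp' Hq. apply: H => //. by rewrite in_cons Hp' orbT.
Qed.

Lemma swap_in_snd ps a b : (a, b) \in ps -> a != b ->
  (forall p, p \in ps -> (b == p.1) || (b == p.2) -> p = (a, b)) -> swap_in ps b = a.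
Proof.
elim: ps => [//|p ps IH] Hin Hab H. rewrite swap_in_cons.
case: (boolP (b == p.1)) => H1.
  have Hp := H p (mem_head _ _). rewrite H1 in Hp. have Hp' := Hp erefl.
  subst p. simpl in H1. lia.
case: (boolP (b == p.2)) => H2.
  have Hp := H p (mem_head _ _). rewrite H2 orbT in Hp. by rewrite (Hp erefl).
apply: IH => //.
  move: Hin; rewrite in_cons => /orP[/eqP Hp|//]. by rewrite -Hp /= eqxx in H2.
move=> p' Hp' Hq. apply: H => //. by rewrite in_cons Hp' orbT.
Qed.

Lemma odd_pairsP n par p : p \in odd_pairs n par ->
  exists i, [/\ p = (2*i+1, 2*i+3), 1 <= i <= (n-3) %/ 2 & odd i = par].
Proof.
rewrite /odd_pairs => /mapP[i]. rewrite mem_filter mem_iota => /andP[/eqP Hpar Hi] ->.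
exists i; split => //; lia.
Qed.
Lemma odd_pairs_in n par i : 1 <= i <= (n-3) %/ 2 -> odd i = par -> (2*i+1, 2*i+3) \in odd_pairs n par.
Proof.
move=> Hi Hp. rewrite /odd_pairs. apply: (map_f (fun i => (2*i+1, 2*i+3))).
rewrite mem_filter mem_iota Hp eqxx /=. lia.
Qed.
Lemma even_pairsP n par p : p \in even_pairs n par ->
  exists j, [/\ p = (2*j, 2*j+2), 3 <= j < 3 + ((n-3) %/ 2 - 2) & odd j = par].
Proof.
rewrite /even_pairs => /mapP[j]. rewrite mem_filter mem_iota => /andP[/eqP Hpar Hj] ->.
by exists j; split.
Qed.
Lemma even_pairs_in n par j : 3 <= j < 3 + ((n-3) %/ 2 - 2) -> odd j = par -> (2*j, 2*j+2) \in even_pairs n par.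
Proof.
move=> Hj Hp. rewrite /even_pairs. apply: (map_f (fun j => (2*j, 2*j+2))).
by rewrite mem_filter mem_iota Hp eqxx /=.
Qed.

Ltac pcase H :=
  first [ case/odd_pairsP: H => [i' [H Hi' Hp']]; subst
        | case/even_pairsP: H => [j' [H Hj' Hp']]; subst
        | move/eqP: H => H; subst ].
Ltac uniq_tac :=
  let p := fresh "p" in let Hp := fresh "Hp" in let Hq := fresh "Hq" in
  move=> p Hp Hq; rewrite ?in_cons ?mem_cat in Hp;
  repeat (case/orP: Hp => Hp); pcase Hp; simpl in Hq; congr (_, _); first [lia | (match goal with |- ?G => idtac "FAILED" G end; repeat match goal with H : ?T |- _ => idtac H ":" T; clear H end; fail 100)].
Ltac notin_tac :=
  let p := fresh "p" in let Hp := fresh "Hp" in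
  move=> p Hp; rewrite ?in_cons ?mem_cat in Hp;
  repeat (case/orP: Hp => Hp); pcase Hp; simpl; first [done | lia | (apply/andP; split; lia)].

Section Acts.
Variable t : nat.
Hypothesis Ht : 2 <= t.
Local Notation n := (4*t+3).

Lemma actA_4k1 k : 1 <= k -> 4*k+1 <= n -> act_a n (4*k+1) = 4*k+3.
Proof.
move=> Hk Hq. rewrite /act_a.
have -> : (4*k+1 == 1) = false by lia. have -> : (4*k+1 == 2) = false by lia.
have -> : (4*k+1 == 3) = false by lia. have -> : (4*k+1 == 4) = false by lia.
apply: swap_in_fst.
  rewrite mem_cat; apply/orP; left. have -> : 4*k+1 = 2*(2*k)+1 by lia. have -> : 4*k+3 = 2*(2*k)+3 by lia.
  apply: odd_pairs_in; lia.
uniq_tac.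
Qed.

Ltac a_pre q := rewrite /act_a;
  (have -> : (q == 1) = false by lia); (have -> : (q == 2) = false by lia);
  (have -> : (q == 3) = false by lia); (have -> : (q == 4) = false by lia).

Lemma actA_4k3 k : 1 <= k -> 4*k+3 <= n -> act_a n (4*k+3) = 4*k+1.
Proof.
move=> Hk Hq. a_pre (4*k+3). apply: swap_in_snd; [|lia|uniq_tac].
rewrite mem_cat; apply/orP; left. have -> : 4*k+1 = 2*(2*k)+1 by lia. have -> : 4*k+3 = 2*(2*k)+3 by lia.
apply: odd_pairs_in; lia.
Qed.
Lemma actA_4k k : 2 <= k -> 4*k <= n-1 -> act_a n (4*k) = 4*k-2.
Proof.
move=> Hk Hq. a_pre (4*k). apply: swap_in_snd; [|lia|uniq_tac].
rewrite mem_cat; apply/orP; right. have -> : 4*k-2 = 2*(2*k-1) by lia. have -> : 4*k = 2*(2*k-1)+2 by lia.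
apply: even_pairs_in; lia.
Qed.
Lemma actA_4k2 k : 1 <= k <= t-1 -> act_a n (4*k+2) = 4*k+4.
Proof.
move=> Hk. a_pre (4*k+2). apply: swap_in_fst; [|uniq_tac].
rewrite mem_cat; apply/orP; right. have -> : 4*k+2 = 2*(2*k+1) by lia. have -> : 4*k+4 = 2*(2*k+1)+2 by lia.
apply: even_pairs_in; lia.
Qed.
Lemma actA_4t2 : act_a n (4*t+2) = 4*t+2.
Proof. a_pre (4*t+2). apply: swap_in_notin. notin_tac. Qed.
Lemma actA_1 : act_a n 1 = 2. Proof. by []. Qed.
Lemma actA_2 : act_a n 2 = 3. Proof. by []. Qed.
Lemma actA_3 : act_a n 3 = 4. Proof. by []. Qed.
Lemma actA_4 : act_a n 4 = 1. Proof. by []. Qed.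

Lemma actB_1 : act_b n 1 = 6.
Proof. apply: swap_in_fst; [by rewrite mem_head|uniq_tac]. Qed.
Lemma actB_6 : act_b n 6 = 1.
Proof. apply: swap_in_snd; [by rewrite mem_head|by []|uniq_tac]. Qed.
Lemma actB_2 : act_b n 2 = 2.
Proof. apply: swap_in_notin. notin_tac. Qed.
Lemma actB_4 : act_b n 4 = 4.
Proof. apply: swap_in_notin. notin_tac. Qed.
Lemma actB_4k1 k : 1 <= k -> 4*k+1 <= n -> act_b n (4*k+1) = 4*k-1.
Proof.
move=> Hk Hq. apply: swap_in_snd; [|lia|uniq_tac].
rewrite in_cons mem_cat; apply/orP; right; apply/orP; left.
have -> : 4*k-1 = 2*(2*k-1)+1 by lia. have -> : 4*k+1 = 2*(2*k-1)+3 by lia.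
apply: odd_pairs_in; lia.
Qed.
Lemma actB_4k3 k : k <= t-1 -> act_b n (4*k+3) = 4*k+5.
Proof.
move=> Hk. apply: swap_in_fst; [|uniq_tac].
rewrite in_cons mem_cat; apply/orP; right; apply/orP; left.
have -> : 4*k+3 = 2*(2*k+1)+1 by lia. have -> : 4*k+5 = 2*(2*k+1)+3 by lia.
apply: odd_pairs_in; lia.
Qed.
Lemma actB_n : act_b n (4*t+3) = 4*t+3.
Proof. apply: swap_in_notin. notin_tac. Qed.
Lemma actB_4k k : 2 <= k <= t -> act_b n (4*k) = 4*k+2.
Proof.
move=> Hk. apply: swap_in_fst; [|uniq_tac].
rewrite in_cons mem_cat; apply/orP; right; apply/orP; right.
have -> : 4*k = 2*(2*k) by lia.
apply: even_pairs_in; lia.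
Qed.
Lemma actB_4k2 k : 2 <= k <= t -> act_b n (4*k+2) = 4*k.
Proof.
move=> Hk. apply: swap_in_snd; [|lia|uniq_tac].
rewrite in_cons mem_cat; apply/orP; right; apply/orP; right.
have -> : 4*k = 2*(2*k) by lia.
apply: even_pairs_in; lia.
Qed.
End Acts.

Unset Implicit Arguments.

Set Implicit Arguments. Unset Strict Implicit. Unset Printing Implicit Defensive.

Definition eZ (t q : nat) : Z :=
  let n := nZ (Z.of_nat t) in let k := Z.of_nat (q %/ 4) in
  if q == 1 then (n - 2)%Z else if q == 2 then 0%Z else if q == 4 then 1%Z
  else if q %% 4 == 1 then (2*k)%Z else if q %% 4 == 3 then (n-1-2*k)%Z
  else if q %% 4 == 0 then (n - 2*k)%Z else (2*k+1)%Z.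

Ltac ifs := repeat (case: ifP => ?); rewrite /nZ; lia.

Section E.
Variable t : nat.
Hypothesis Ht : 2 <= t.
Local Notation n := (4*t+3).
Local Notation tZ := (Z.of_nat t).

Lemma eZ_1 : eZ t 1 = (nZ tZ - 2)%Z. Proof. by []. Qed.
Lemma eZ_2 : eZ t 2 = 0%Z. Proof. by []. Qed.
Lemma eZ_3 : eZ t 3 = (nZ tZ - 1)%Z. Proof. rewrite /eZ /nZ /=. lia. Qed.
Lemma eZ_4 : eZ t 4 = 1%Z. Proof. by []. Qed.
Lemma eZ_4k1 k : 1 <= k -> eZ t (4*k+1) = (2 * Z.of_nat k)%Z.
Proof. move=> Hk. rewrite /eZ. ifs. Qed.
Lemma eZ_4k3 k : eZ t (4*k+3) = (nZ tZ - 1 - 2 * Z.of_nat k)%Z.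
Proof. rewrite /eZ. ifs. Qed.
Lemma eZ_4k k : 2 <= k -> eZ t (4*k) = (nZ tZ - 2 * Z.of_nat k)%Z.
Proof. move=> Hk. rewrite /eZ. ifs. Qed.
Lemma eZ_4k2 k : 1 <= k -> eZ t (4*k+2) = (2 * Z.of_nat k + 1)%Z.
Proof. move=> Hk. rewrite /eZ. ifs. Qed.

Lemma classes q : 1 <= q <= n ->
  q = 1 \/ q = 2 \/ q = 4 \/ (exists k, 1 <= k /\ q = 4*k+1) \/ (exists k, q = 4*k+3) \/
  (exists k, 2 <= k /\ q = 4*k) \/ (exists k, 1 <= k /\ q = 4*k+2).
Proof.
move=> Hq.
have Hd := divn_eq q 4. have Hm := ltn_pmod q (isT : 0 < 4).
move: (q %% 4) Hm Hd => r Hr Hd.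
case: r Hr Hd => [|[|[|[|]]]] // _ Hd.
- case: (ltnP q 5) => H5; [right; right; left; lia|].
  right; right; right; right; right; left; exists (q %/ 4); lia.
- case: (ltnP q 5) => H5; [left; lia|].
  right; right; right; left; exists (q %/ 4); lia.
- case: (ltnP q 5) => H5; [right; left; lia|].
  right; right; right; right; right; right; exists (q %/ 4); lia.
- right; right; right; right; left; exists (q %/ 4); lia.
Qed.

Ltac apsZ := rewrite /Aps /Bps /nZ; repeat match goal with |- context[if ?c then _ else _] => let H := fresh "H" in destruct c eqn:H end; lia.

Ltac rw L := rewrite L; try lia.

Lemma conjA q : 1 <= q <= n -> 1 <= act_a n q <= n /\ eZ t (act_a n q) = Aps tZ (eZ t q).
Proof.
move=> Hq. case: (classes Hq) => [E|[E|[E|[[k [Hk E]]|[[k E]|[[k [Hk E]]|[k [Hk E]]]]]]]]; subst q.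
- rewrite actA_1 eZ_1 eZ_2. split; [lia|apsZ].
- rewrite actA_2 eZ_2 eZ_3. split; [lia|apsZ].
- rewrite actA_4 eZ_4 eZ_1. split; [lia|apsZ].
- rw actA_4k1. rw eZ_4k1. rw eZ_4k3. split; [lia|apsZ].
- case: (posnP k) => [->|Hk]; first by rewrite actA_3 eZ_3 eZ_4; split; [lia|apsZ].
  rw actA_4k3. rw eZ_4k3. rw eZ_4k1. split; [lia|apsZ].
- rw actA_4k. rw eZ_4k.
  have -> : 4*k-2 = 4*(k-1)+2 by lia. rw eZ_4k2. split; [lia|apsZ].
- case: (ltnP k t) => Hkt.
  + rw actA_4k2. have -> : 4*k+4 = 4*(k+1) by lia.
    rw eZ_4k. rw eZ_4k2. split; [lia|apsZ].
  + have Ek : k = t by lia. subst k. rw actA_4t2. rw eZ_4k2. split; [lia|apsZ].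
Qed.

Lemma conjB q : 1 <= q <= n -> 1 <= act_b n q <= n /\ eZ t (act_b n q) = Bps tZ (eZ t q).
Proof.
move=> Hq. case: (classes Hq) => [E|[E|[E|[[k [Hk E]]|[[k E]|[[k [Hk E]]|[k [Hk E]]]]]]]]; subst q.
- rw actB_1. rw eZ_1. have -> : 6 = 4*1+2 by []. rw eZ_4k2. split; [lia|apsZ].
- rw actB_2. rw eZ_2. split; [lia|apsZ].
- rw actB_4. rw eZ_4. split; [lia|apsZ].
- rw actB_4k1. have -> : 4*k-1 = 4*(k-1)+3 by lia. rw eZ_4k3. rw eZ_4k1. split; [lia|apsZ].
- case: (ltnP k t) => Hkt.
  + rw actB_4k3. have -> : 4*k+5 = 4*(k+1)+1 by lia. rw eZ_4k1.
    rw eZ_4k3. split; [lia|apsZ].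
  + have Ek : k = t by lia. subst k. rw actB_n. rw eZ_4k3. split; [lia|apsZ].
- rw actB_4k. rw eZ_4k. rw eZ_4k2. split; [lia|apsZ].
- case: (ltnP k 2) => Hk2.
  + have Ek : k = 1 by lia. subst k. rw actB_6. rw eZ_1. rw eZ_4k2. split; [lia|apsZ].
  + rw actB_4k2. rw eZ_4k. rw eZ_4k2. split; [lia|apsZ].
Qed.

Lemma eZ_range q : 1 <= q <= n -> (0 <= eZ t q < nZ tZ)%Z.
Proof. move=> Hq. rewrite /eZ. ifs. Qed.

Lemma eZ_inj q q' : 1 <= q <= n -> 1 <= q' <= n -> eZ t q = eZ t q' -> q = q'.
Proof. move=> Hq Hq'. rewrite /eZ. ifs. Qed.
End E.

Unset Implicit Arguments.

Definition stepZ (tZ : Z) (l : letter) (x : Z) : Z :=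
  match l with La => Aps tZ x | Lb => Bps tZ x end.
Definition psiw (tZ : Z) (w : seq letter) (x : Z) : Z := foldl (fun x l => stepZ tZ l x) x w.
Definition tstep (tZ : Z) (l : letter) (h Q : Z) : Z * Z :=
  match l with La => tstepA tZ h Q | Lb => tstepB tZ h Q end.

Section W.
Variable tZ : Z.
Hypothesis Ht : (2 <= tZ)%Z.

Lemma stepZ_range l x : (0 <= x < nZ tZ)%Z -> (0 <= stepZ tZ l x < nZ tZ)%Z.
Proof. case: l => H; [apply: Aps_range|apply: Bps_range]; auto. Qed.
Lemma stepZ_inj l x y : (0 <= x < nZ tZ)%Z -> (0 <= y < nZ tZ)%Z -> x <> y -> stepZ tZ l x <> stepZ tZ l y.
Proof. case: l => Hx Hy Hxy; [apply: Aps_inj|apply: Bps_inj]; auto. Qed.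
Lemma canon_step l x y : (0 <= x < nZ tZ)%Z -> (0 <= y < nZ tZ)%Z -> x <> y ->
  canon tZ (stepZ tZ l x) (stepZ tZ l y) = tstep tZ l (fst (canon tZ x y)) (snd (canon tZ x y)).
Proof. case: l => Hx Hy Hxy; [apply: simA'|apply: simB']; auto. Qed.
Lemma lip_step l h Q : valid tZ h Q ->
  (Dz tZ h Q <= Dz tZ (fst (tstep tZ l h Q)) (snd (tstep tZ l h Q)) + 1)%Z.
Proof. case: l => Hv; [apply: lipA_all|apply: lipB_all]; auto. Qed.

Lemma psiw_cons l w x : psiw tZ (l :: w) x = psiw tZ w (stepZ tZ l x).
Proof. by []. Qed.

Lemma psiw_props w x y : (0 <= x < nZ tZ)%Z -> (0 <= y < nZ tZ)%Z -> x <> y ->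
  [/\ (0 <= psiw tZ w x < nZ tZ)%Z, (0 <= psiw tZ w y < nZ tZ)%Z & psiw tZ w x <> psiw tZ w y].
Proof.
elim: w x y => [|l w IH] x y Hx Hy Hxy /=; first by split.
apply: IH; [apply: stepZ_range|apply: stepZ_range|apply: stepZ_inj]; auto.
Qed.

Lemma lower w x y : (0 <= x < nZ tZ)%Z -> (0 <= y < nZ tZ)%Z -> x <> y ->
  (Dz tZ (fst (canon tZ x y)) (snd (canon tZ x y)) <=
   Z.of_nat (size w) + Dz tZ (fst (canon tZ (psiw tZ w x) (psiw tZ w y))) (snd (canon tZ (psiw tZ w x) (psiw tZ w y))))%Z.
Proof.
elim: w x y => [|l w IH] x y Hx Hy Hxy; first by rewrite /=; lia.
rewrite !psiw_cons. change (size (l :: w)) with (size w).+1.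
have H1 := IH (stepZ tZ l x) (stepZ tZ l y) (stepZ_range l x Hx) (stepZ_range l y Hy) (stepZ_inj l x y Hx Hy Hxy).
have H2 := lip_step l _ _ (canon_valid tZ x y Ht Hx Hy Hxy).
rewrite -canon_step // in H2. lia.
Qed.

Lemma upper (k : nat) : forall x y, (0 <= x < nZ tZ)%Z -> (0 <= y < nZ tZ)%Z -> x <> y ->
  Dz tZ (fst (canon tZ x y)) (snd (canon tZ x y)) = Z.of_nat k ->
  exists w, size w = k /\ Dz tZ (fst (canon tZ (psiw tZ w x) (psiw tZ w y))) (snd (canon tZ (psiw tZ w x) (psiw tZ w y))) = 0%Z.
Proof.
elim: k => [|k IH] x y Hx Hy Hxy HD.
  by exists [::].
have Hv := canon_valid tZ x y Ht Hx Hy Hxy.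
have Hp : (0 < Dz tZ (fst (canon tZ x y)) (snd (canon tZ x y)))%Z by lia.
have [l Hl] : exists l, (Dz tZ (fst (tstep tZ l (fst (canon tZ x y)) (snd (canon tZ x y))))
                             (snd (tstep tZ l (fst (canon tZ x y)) (snd (canon tZ x y)))) + 1 =
                         Dz tZ (fst (canon tZ x y)) (snd (canon tZ x y)))%Z.
  case: (desc_all tZ _ _ Ht Hv Hp) => H; [exists La|exists Lb]; exact H.
rewrite -canon_step // in Hl.
have [w [Hw1 Hw2]] := IH _ _ (stepZ_range l x Hx) (stepZ_range l y Hy) (stepZ_inj l x y Hx Hy Hxy) ltac:(lia).
by exists (l :: w); split; [rewrite /= Hw1|].
Qed.
End W.

Lemma aw_cons n l w q : act_word n (l :: w) q = act_word n w (act_letter n l q).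
Proof. by []. Qed.

Lemma act_word_conj t w q : 2 <= t -> 1 <= q <= 4*t+3 ->
  1 <= act_word (4*t+3) w q <= 4*t+3 /\ eZ t (act_word (4*t+3) w q) = psiw (Z.of_nat t) w (eZ t q).
Proof.
move=> Ht. elim: w q => [|l w IH] q Hq; first by split.
rewrite aw_cons psiw_cons.
have [H1 H2] : 1 <= act_letter (4*t+3) l q <= 4*t+3 /\
               eZ t (act_letter (4*t+3) l q) = stepZ (Z.of_nat t) l (eZ t q).
  by case: l; [apply: conjA|apply: conjB].
rewrite -H2. exact: IH.
Qed.

Lemma eZ_tgt t : 2 <= t ->
  (~~ odd t /\ eZ t (2*t+1) = Z.of_nat t /\ eZ t (2*t+3) = (3 * Z.of_nat t + 2)%Z) \/
  (odd t /\ eZ t (2*t+1) = (3 * Z.of_nat t + 3)%Z /\ eZ t (2*t+3) = (Z.of_nat t + 1)%Z).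
Proof.
move=> Ht. case: (boolP (odd t)) => Ho.
- right. split; first done.
  have [s Es] : exists s, t = 2*s+1 by exists t./2; lia.
  have E1 : eZ t (2*t+1) = eZ t (4*s+3) by congr eZ; lia.
  have E2 : eZ t (2*t+3) = eZ t (4*(s+1)+1) by congr eZ; lia.
  rewrite E1 E2. rewrite eZ_4k3; try lia. rewrite (@eZ_4k1 t Ht (s+1)); try lia.
  rewrite /nZ. split; lia.
- left. split; first done.
  have [s Es] : exists s, t = 2*s by exists t./2; lia.
  have E1 : eZ t (2*t+1) = eZ t (4*s+1) by congr eZ; lia.
  have E2 : eZ t (2*t+3) = eZ t (4*s+3) by congr eZ; lia.
  rewrite E1 E2. rewrite eZ_4k3; try lia. rewrite (@eZ_4k1 t Ht s); try lia.
  rewrite /nZ. split; lia.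
Qed.

Theorem mainTheorem10 (n : nat) :
  7 < n -> n %% 4 = 3 ->
  let k := (n - 5) %/ 2 in
  let L := (n ^ 2 + 5 * n - 28) %/ 4 in
  (exists w : seq letter, size w = L /\ act_set n [:: 2; 4] w =i [:: k + 2; k + 4]) /\
  (forall w : seq letter, act_set n [:: 2; 4] w =i [:: k + 2; k + 4] -> L <= size w).
Proof.
move=> Hn Hm. cbv zeta.
have [t Et] : exists t, n = 4*t+3 by exists (n %/ 4); lia.
subst n. have Ht : 2 <= t by lia.
have -> : (4*t+3-5) %/ 2 = 2*t-1 by lia.
have -> : ((4*t+3)^2 + 5*(4*t+3) - 28) %/ 4 = 4*t*t + 11*t - 1.
  rewrite expnS expn1. nia.
have -> : 2*t-1+2 = 2*t+1 by lia. have -> : 2*t-1+4 = 2*t+3 by lia.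
set tZ := Z.of_nat t.
have HtZ : (2 <= tZ)%Z by rewrite /tZ; lia.
have H0 : (0 <= 0 < nZ tZ)%Z by rewrite /nZ; lia.
have H1 : (0 <= 1 < nZ tZ)%Z by rewrite /nZ; lia.
have H01 : (0 <> 1)%Z by lia.
have Hstart : Dz tZ (fst (canon tZ 0 1)) (snd (canon tZ 0 1)) = (4*tZ*tZ + 11*tZ - 1)%Z.
  by rewrite canon_start // Dz_start.
split.
-
  have Hk : Dz tZ (fst (canon tZ 0 1)) (snd (canon tZ 0 1)) = Z.of_nat (4*t*t + 11*t - 1).
    rewrite Hstart /tZ. lia.
  have [w [Hw HD]] := upper tZ HtZ (4*t*t + 11*t - 1) 0 1 H0 H1 H01 Hk.
  exists w. split=>//.
  have [P1 P2 P3] := psiw_props tZ HtZ w 0 1 H0 H1 H01.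
  have Hv := canon_valid tZ _ _ HtZ P1 P2 P3.
  have [Hh HQ] := Dz_zero tZ _ _ HtZ Hv HD.
  have Htg := canon_target tZ _ _ HtZ P1 P2 P3 Hh HQ.
  have [Ha2 Ea2] := act_word_conj t w 2 Ht ltac:(lia).
  have [Ha4 Ea4] := act_word_conj t w 4 Ht ltac:(lia).
  rewrite eZ_2 in Ea2. rewrite eZ_4 in Ea4.
  set u := act_word (4*t+3) w 2 in Ha2 Ea2 *.
  set v := act_word (4*t+3) w 4 in Ha4 Ea4 *.
  have [[Hu Hv2]|[Hu Hv2]] : (u = 2*t+1 /\ v = 2*t+3) \/ (u = 2*t+3 /\ v = 2*t+1).
    have Hr1 : 1 <= 2*t+1 <= 4*t+3 by lia. have Hr3 : 1 <= 2*t+3 <= 4*t+3 by lia.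
    case: (eZ_tgt t Ht) => [[Ho [E1 E3]]|[Ho [E1 E3]]].
    + have Hev : Z.even tZ = true.
        have [s Es] : exists s, t = 2*s by exists t./2; lia.
        rewrite /tZ Es Nat2Z.inj_mul. apply/Z.even_spec. by exists (Z.of_nat s).
      case: Htg => [[_ [[Ex Ey]|[Ex Ey]]]|[Hf _]]; last by rewrite Hf in Hev.
      * left. split; apply: (eZ_inj Ht) => //; [rewrite Ea2 Ex E1|rewrite Ea4 Ey E3] => //.
      * right. split; apply: (eZ_inj Ht) => //; [rewrite Ea2 Ex E3|rewrite Ea4 Ey E1] => //.
    + have Hev : Z.even tZ = false.
        have [s Es] : exists s, t = 2*s+1 by exists t./2; lia.
        rewrite /tZ Es Nat2Z.inj_add Nat2Z.inj_mul. rewrite Z.add_comm Z.even_add_mul_2. by [].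
      case: Htg => [[Hf _]|[_ [[Ex Ey]|[Ex Ey]]]]; first by rewrite Hf in Hev.
      * right. split; apply: (eZ_inj Ht) => //; [rewrite Ea2 Ex E3; rewrite /tZ; lia|rewrite Ea4 Ey E1; rewrite /tZ; lia].
      * left. split; apply: (eZ_inj Ht) => //; [rewrite Ea2 Ex E1; rewrite /tZ; lia|rewrite Ea4 Ey E3; rewrite /tZ; lia].
  + move=> z. by rewrite /act_set /= -/u -/v Hu Hv2.
  + move=> z. rewrite /act_set /= -/u -/v Hu Hv2 !inE. by rewrite orbC.
-
  move=> w H.
  have [Ha2 Ea2] := act_word_conj t w 2 Ht ltac:(lia).
  have [Ha4 Ea4] := act_word_conj t w 4 Ht ltac:(lia).
  rewrite eZ_2 in Ea2. rewrite eZ_4 in Ea4.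
  set u := act_word (4*t+3) w 2 in Ha2 Ea2 H *.
  set v := act_word (4*t+3) w 4 in Ha4 Ea4 H *.
  have Hset : act_set (4*t+3) [:: 2; 4] w = [:: u; v] by [].
  rewrite Hset in H.
  have [[Hu Hv2]|[Hu Hv2]] : (u = 2*t+1 /\ v = 2*t+3) \/ (u = 2*t+3 /\ v = 2*t+1).
    move: (H u) (H v) (H (2*t+1)) (H (2*t+3)). rewrite !inE !eqxx /= ?orbT.
    move=> E1 E2 E3 E4. lia.
  + have Hlow := lower tZ HtZ w 0 1 H0 H1 H01.
    rewrite Hstart in Hlow.
    have Hz : Dz tZ (fst (canon tZ (psiw tZ w 0) (psiw tZ w 1))) (snd (canon tZ (psiw tZ w 0) (psiw tZ w 1))) = 0%Z.
      rewrite -Ea2 -Ea4 Hu Hv2.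
      case: (eZ_tgt t Ht) => [[Ho [E1 E3]]|[Ho [E1 E3]]]; rewrite E1 E3.
      * have [s Es] : exists s, t = 2*s by exists t./2; lia.
        have -> : tZ = (2 * Z.of_nat s)%Z by rewrite /tZ Es; lia.
        apply: tgt_even; lia.
      * have [s Es] : exists s, t = 2*s+1 by exists t./2; lia.
        have -> : tZ = (2 * Z.of_nat s + 1)%Z by rewrite /tZ Es; lia.
        apply: tgt_odd; lia.
    rewrite Hz in Hlow. rewrite /tZ in Hlow. lia.
  + have Hlow := lower tZ HtZ w 0 1 H0 H1 H01.
    rewrite Hstart in Hlow.
    have Hz : Dz tZ (fst (canon tZ (psiw tZ w 0) (psiw tZ w 1))) (snd (canon tZ (psiw tZ w 0) (psiw tZ w 1))) = 0%Z.
      rewrite -Ea2 -Ea4 Hu Hv2.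
      case: (eZ_tgt t Ht) => [[Ho [E1 E3]]|[Ho [E1 E3]]]; rewrite E1 E3.
      * have [s Es] : exists s, t = 2*s by exists t./2; lia.
        have -> : tZ = (2 * Z.of_nat s)%Z by rewrite /tZ Es; lia.
        apply: tgt_even; lia.
      * have [s Es] : exists s, t = 2*s+1 by exists t./2; lia.
        have -> : tZ = (2 * Z.of_nat s + 1)%Z by rewrite /tZ Es; lia.
        apply: tgt_odd; lia.
    rewrite Hz in Hlow. rewrite /tZ in Hlow. lia.
Qed.
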